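(* Let $(X,\mathcal{B},\mu,T)$ be a measure-preserving transformation of type $\mathbf{II}_\infty$. Let $\alpha$ be a local partition whose core $A$ is a sweep-out set. Then $$\lim_{n\to\infty}\sup\Bigl\{\mu(a):\ a\in\bigvee_{k=0}^{n-1}T^{-k}\alpha,\ 0<\mu(a)<\infty\Bigr\}=0.$$
   Context: Let $(X,\mathcal{B},\mu)$ be a standard $\sigma$-finite measure space and $T$ a measure-preserving transformation. Type $\mathbf{II}_\infty$: $T$ is conservative and there is no $T$-invariant set of finite positive measure. For a countable partition $\alpha$, define $H_\mu(\alpha)=\sum_{a\in\alpha,\,0<\mu(a)<\infty}\mu(a)\log\frac{1}{\mu(a)}$; atoms of infinite measure contribute $0$. A countable partition $\alpha$ is local with core $A$ if $0<\mu(A)<\infty$, $X\setminus A\in\alpha$ and $H_\mu(\alpha)<\infty$. A set $A$ is a sweep-out set if $\bigcup_{n\ge0}T^{-n}A=X$ mod $\mu$. *)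

(* Defs.v *)
From HB Require Import structures.
From mathcomp Require Import all_boot all_order all_algebra.
From mathcomp Require Import all_classical all_reals all_analysis.
Set Implicit Arguments. Unset Strict Implicit. Unset Printing Implicit Defensive.
Import Order.TTheory GRing.Theory Num.Theory.
Local Open Scope classical_set_scope.
Local Open Scope ring_scope.

Section Defs.
Context (d : measure_display) (X : measurableType d) (R : realType).

Definition standard_borel : Prop :=
  exists f : X -> R, injective f /\ measurable_fun setT f /\
    measurable (range f) /\ (forall B, measurable B -> measurable (f @` B)).

Variable (mu : {measure set X -> \bar R}) (T : X -> X).

Definition measure_preserving : Prop :=
  measurable_fun setT T /\
  forall B, measurable B -> mu (T @^-1` B) = mu B.

Definition wandering (W : set X) : Prop :=
  measurable W /\ forall n : nat, (0 < n)%N -> W `&` (iter n T) @^-1` W = set0.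

Definition conservative : Prop :=
  forall W, wandering W -> mu W = 0%E.

Definition invariant (B : set X) : Prop := T @^-1` B = B.

Definition type_II_infty : Prop :=
  conservative /\
  ~ (exists B, measurable B /\ invariant B /\ (0 < mu B < +oo)%E).

Definition countable_partition (alpha : set (set X)) : Prop :=
  countable alpha /\ (forall a, alpha a -> measurable a) /\
  trivIset alpha id /\ \bigcup_(a in alpha) a = setT.

Definition finpos_atoms (alpha : set (set X)) : set (set X) :=
  [set a | alpha a /\ (0 < mu a < +oo)%E].

Definition eta (t : R) : R := t * ln (t^-1).

Definition finite_entropy (alpha : set (set X)) : Prop :=
  (\esum_(a in finpos_atoms alpha) (`| eta (fine (mu a)) |)%:E < +oo)%E.

Definition local_partition (alpha : set (set X)) (A : set X) : Prop :=
  countable_partition alpha /\ (0 < mu A < +oo)%E /\ alpha (~` A) /\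
  finite_entropy alpha.

Definition sweep_out (A : set X) : Prop :=
  mu (~` \bigcup_(n in [set: nat]) (iter n T) @^-1` A) = 0%E.

Definition join_iter (alpha : set (set X)) (n : nat) : set (set X) :=
  [set b | exists f : nat -> set X, (forall k, (k < n)%N -> alpha (f k)) /\
     b = \bigcap_(k in `I_n) (iter k T) @^-1` (f k)].

Definition max_atom (alpha : set (set X)) (n : nat) : \bar R :=
  ereal_sup [set mu a | a in finpos_atoms (join_iter alpha n)].

End Defs.

(* Main.v *)
Require Import Defs.
From HB Require Import structures.
From mathcomp Require Import all_boot all_order all_algebra.
From mathcomp Require Import all_classical all_reals all_analysis.
From mathcomp Require Import zify.
Import Order.TTheory GRing.Theory Num.Theory.
Local Open Scope classical_set_scope.
Local Open Scope ring_scope.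
Set Implicit Arguments. Unset Strict Implicit. Unset Printing Implicit Defensive.

Section Main.
Context (d : measure_display) (X : measurableType d) (R : realType)
    (mu : {measure set X -> \bar R}) (T : X -> X)
    (alpha : set (set X)) (A : set X) (e : nat -> set X).
Hypothesis HTm : measurable_fun setT T.
Hypothesis HTp : forall B, measurable B -> mu (T @^-1` B) = mu B.
Hypothesis Hcons : conservative mu T.
Hypothesis Hninv : ~ (exists B, measurable B /\ Defs.invariant T B /\ (0 < mu B < +oo)%E).
Hypothesis Hmeas : forall a, alpha a -> measurable a.
Hypothesis Htriv : trivIset alpha id.
Hypothesis He1 : forall n, alpha (e n).
Hypothesis He2 : forall x, exists n, e n x.
Hypothesis HA0 : (0 < mu A)%E.
Hypothesis HAf : (mu A < +oo)%E.
Hypothesis HAc : alpha (~` A).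
Hypothesis Hsw : sweep_out mu T A.

Local Notation Pre k B := (iter k T @^-1` B).

Lemma mpre k B : measurable B -> measurable (Pre k B).
Proof.
elim: k B => [|k IH] B mB; first by rewrite /= preimage_id.
have -> : Pre k.+1 B = Pre k (T @^-1` B).
  by [].
apply: IH; rewrite -[_ @^-1` _]setTI; exact: HTm.
Qed.

Lemma mupre k B : measurable B -> mu (Pre k B) = mu B.
Proof.
elim: k B => [|k IH] B mB; first by rewrite /= preimage_id.
have -> : Pre k.+1 B = Pre k (T @^-1` B).
  by [].
rewrite IH ?HTp //; rewrite -[_ @^-1` _]setTI; exact: HTm.
Qed.

Lemma mA : measurable A.
Proof. by rewrite -[A]setCK; apply: measurableC; exact: Hmeas. Qed.

Lemma uniq_alpha a b x : alpha a -> alpha b -> a x -> b x -> a = b.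
Proof. by move=> aa ab ax bx; apply: Htriv => //; exists x. Qed.

Definition idx (x : X) : nat := projT1 (cid (He2 x)).
Definition cell (x : X) : set X := e (idx x).

Lemma cell_in x : cell x x.
Proof. by rewrite /cell /idx; case: cid. Qed.

Lemma cell_alpha x : alpha (cell x).
Proof. exact: He1. Qed.

Lemma cell_uniq a x : alpha a -> a x -> cell x = a.
Proof. by move=> aa ax; apply: (uniq_alpha (cell_alpha x) aa (cell_in x) ax). Qed.

Lemma cell_nA x : ~ A x -> cell x = ~` A.
Proof. by move=> nAx; apply: cell_uniq. Qed.

Lemma cell_A x w : A x -> cell w = cell x -> A w.
Proof.
move=> Ax cwx; apply: contrapT => nAw.
have := cell_in x; rewrite -cwx cell_nA //.
Qed.

Lemma cell_eq x w : cell x w -> cell w = cell x.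
Proof. by move=> h; apply: cell_uniq => //; exact: cell_alpha. Qed.


Definition atom (m : nat) (y : X) : set X :=
  [set z | forall k, (k < m)%N -> cell (iter k T z) = cell (iter k T y)].

Lemma atom_pre m y :
  atom m y = \bigcap_(k in [set k | (k < m)%N]) Pre k (cell (iter k T y)).
Proof.
apply/seteqP; split => z /=.
  by move=> h k km /=; rewrite -(h k km); exact: cell_in.
by move=> h k km; apply: cell_eq; exact: h.
Qed.

Lemma matom m y : measurable (atom m y).
Proof.
rewrite atom_pre; apply: bigcap_measurableType => k _.
apply: mpre; apply: Hmeas; exact: cell_alpha.
Qed.

Lemma atom_in m y : atom m y y.
Proof. by []. Qed.

Lemma atom_eq m y z : atom m y z -> atom m z = atom m y.
Proof.
move=> h; apply/seteqP; split => w /= hw k km.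
  by rewrite hw // h.
by rewrite hw // h.
Qed.

Lemma atom_le n m y : (n <= m)%N -> atom m y `<=` atom n y.
Proof. by move=> nm z h k kn; apply: h; exact: leq_trans kn nm. Qed.

Lemma atom_A m y : (0 < m)%N -> A y -> atom m y `<=` A.
Proof. by move=> m0 Ay z h; apply: (cell_A Ay); exact: (h 0%N m0). Qed.

Lemma atom_shift m r y : atom (m + r) y `<=` Pre r (atom m (iter r T y)).
Proof.
move=> z h k km /=; rewrite -!iterD; apply: h; by rewrite ltn_add2r.
Qed.

Lemma mu_atom_shift m r y :
  (mu (atom (m + r) y) <= mu (atom m (iter r T y)))%E.
Proof.
rewrite -(mupre r (matom m _)); apply: le_measure; rewrite ?inE.
- exact: matom.
- exact/mpre/matom.
- exact: atom_shift.
Qed.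

Lemma mu_atom_le n m y : (n <= m)%N -> (mu (atom m y) <= mu (atom n y))%E.
Proof.
by move=> nm; apply: le_measure; rewrite ?inE; [exact: matom|exact: matom|exact: atom_le].
Qed.

Definition full (y : X) : set X := \bigcap_(m in [set: nat]) atom m y.

Lemma mfull y : measurable (full y).
Proof. by apply: bigcap_measurableType => m _; exact: matom. Qed.

Lemma fullP y z : full y z <-> forall k, cell (iter k T z) = cell (iter k T y).
Proof.
split => [h k|h m _ k _]; last exact: h.
by apply: (h k.+1 I k); rewrite ltnSn.
Qed.

Lemma full_shift r y z : full y z -> full (iter r T y) (iter r T z).
Proof. by move=> /fullP h; apply/fullP => k; rewrite -!iterD. Qed.

Lemma full_eq y z : full y z -> full z = full y.
Proof.
move=> /fullP h; apply/seteqP; split => w /fullP hw; apply/fullP => k.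
  by rewrite hw h.
by rewrite hw h.
Qed.

Lemma full_A y : A y -> full y `<=` A.
Proof. by move=> Ay z /fullP h; apply: (cell_A Ay); exact: (h 0%N). Qed.

Lemma full_Aiter y z i : full y z -> A (iter i T y) -> A (iter i T z).
Proof. by move=> /fullP h Ay; apply: (cell_A Ay); exact: h. Qed.

Lemma full_atom m y : full y `<=` atom m y.
Proof. by move=> z h; exact: h. Qed.

Definition cyl (s : seq nat) : set X :=
  [set z | forall k, (k < size s)%N -> e (nth 0%N s k) (iter k T z)].

Definition word m y : seq nat := mkseq (fun k => idx (iter k T y)) m.

Lemma cyl_atom s z : cyl s z -> cyl s = atom (size s) z.
Proof.
move=> hz; apply/seteqP; split => w hw k ks.
  have h1 := hz k ks; have h2 := hw k ks.
  by rewrite (cell_uniq (He1 _) h1) (cell_uniq (He1 _) h2).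
rewrite -(cell_uniq (He1 _) (hz k ks)) -(hw k ks); exact: cell_in.
Qed.

Lemma word_cyl m y : cyl (word m y) y.
Proof.
move=> k; rewrite size_mkseq => km; rewrite nth_mkseq //; exact: cell_in.
Qed.

Lemma atom_cyl m y : atom m y = cyl (word m y).
Proof. by rewrite (cyl_atom (@word_cyl m y)) size_mkseq. Qed.

Lemma mcyl s : measurable (cyl s).
Proof.
have [->|/set0P[z hz]] := eqVneq (cyl s) set0; first exact: measurable0.
by rewrite (cyl_atom hz); exact: matom.
Qed.

Lemma mbigcup_seq (F : seq nat -> set X) :
  (forall s, measurable (F s)) -> measurable (\bigcup_s F s).
Proof. by move=> mF; apply: countable_bigcupT_measurable. Qed.

Lemma bigcup_seq_nat (F : seq nat -> set X) :
  \bigcup_s F s = \bigcup_n (if @unpickle (seq nat) n is Some s then F s else set0).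
Proof.
apply/seteqP; split => x [s _ hs].
  by exists (pickle s) => //; rewrite pickleK.
by case: (unpickle s) hs => // s' hs; exists s'.
Qed.

Lemma null_bigcup_seq (F : seq nat -> set X) :
  (forall s, measurable (F s)) -> (forall s, mu (F s) = 0%E) -> mu (\bigcup_s F s) = 0%E.
Proof.
move=> mF F0; apply/(negligibleP mu (mbigcup_seq mF)).
rewrite bigcup_seq_nat.
apply: negligible_bigcup => n.
exact/(negligibleP mu (mF _))/F0.
Qed.


Definition E k : set X := \bigcap_(i in [set i | (i < k)%N]) Pre i (~` A).
Definition ent k : set X := E k `&` Pre k A.
Definition Fr k : set X := \bigcap_(i in [set i | (0 < i <= k)%N]) Pre i (~` A).
Definition ret k : set X := A `&` Fr k.
Definition Sk k : set X := A `&` Pre 1 (ent k).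

Lemma mE k : measurable (E k).
Proof. by apply: bigcap_measurableType => i _; apply/mpre/measurableC/mA. Qed.
Lemma ment k : measurable (ent k).
Proof. by apply: measurableI; [exact: mE|exact/mpre/mA]. Qed.
Lemma mFr k : measurable (Fr k).
Proof. by apply: bigcap_measurableType => i _; apply/mpre/measurableC/mA. Qed.
Lemma mret k : measurable (ret k).
Proof. by apply: measurableI; [exact: mA|exact: mFr]. Qed.
Lemma mSk k : measurable (Sk k).
Proof. by apply: measurableI; [exact: mA|exact/mpre/ment]. Qed.

Lemma preS k B x : Pre k.+1 B x = Pre k B (T x).
Proof. by rewrite /preimage /= -iterSr. Qed.

Lemma ent_split k : Pre 1 (ent k) = ent k.+1 `|` Sk k.
Proof.
apply/seteqP; split => x.
  move=> [h1 h2]; have [Ax|nAx] := pselect (A x); first by right.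
  left; split; last by rewrite preS.
  move=> [|i] ik; first exact: nAx.
  by rewrite preS; apply: h1; exact: ik.
move=> [[h1 h2]|[_ h]//]; split; last by rewrite -preS.
by move=> i ik; rewrite -preS; apply: h1; exact: ik.
Qed.

Lemma ent_disj k : ent k.+1 `&` Sk k = set0.
Proof.
apply/seteqP; split => x //= [[h1 _] [Ax _]].
by have := h1 0%N (ltn0Sn k).
Qed.

Lemma ret_split k : ret k = ret k.+1 `|` Sk k.
Proof.
apply/seteqP; split => x.
  move=> [Ax h]; have [h3|h3] := pselect (Pre k.+1 A x).
    right; split => //; split; last by rewrite -preS.
    move=> i ik; rewrite -preS; apply: h; rewrite /=; move: ik => /= ik; lia.
  left; split => // i /= /andP[i0 ik]; rewrite leq_eqVlt in ik.
  case/orP: ik => [/eqP -> //|ik]; apply: h => /=; lia.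
move=> [[Ax h]|[Ax [h1 h2]]]; split => // i /andP[i0 ik].
  by apply: h => /=; lia.
case: i i0 ik => // i _ ik; rewrite preS; apply: h1 => /=; lia.
Qed.

Lemma ret_disj k : ret k.+1 `&` Sk k = set0.
Proof.
apply/seteqP; split => x // [[Ax h] [_ [_ h2]]].
have h3 : Pre k.+1 A x by rewrite preS.
by apply: (h k.+1 _ h3); rewrite /= leqnn.
Qed.

Lemma SkA k : Sk k `<=` A.
Proof. by move=> x []. Qed.

Lemma Sk_fin k : mu (Sk k) \is a fin_num.
Proof.
rewrite ge0_fin_numE ?measure_ge0 //; apply: le_lt_trans HAf.
by apply: le_measure; rewrite ?inE; [exact: mSk|exact: mA|exact: SkA].
Qed.

Lemma ent_ret k : mu (ent k) = mu (ret k).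
Proof.
elim: k => [|k IH].
  congr (mu _); apply/seteqP; split => x /=.
    by move=> [_ Ax]; split => // i /= /andP[i0 i1]; lia.
  by move=> [Ax _]; split.
have h1 : mu (ent k) = (mu (ent k.+1) + mu (Sk k))%E.
  by rewrite -(mupre 1 (ment k)) ent_split measureU //; [exact: ment|exact: mSk|exact: ent_disj].
have h2 : mu (ret k) = (mu (ret k.+1) + mu (Sk k))%E.
  by rewrite {1}ret_split measureU //; [exact: mret|exact: mSk|exact: ret_disj].
by rewrite -(addeK (mu (ent k.+1)) (Sk_fin k)) -(addeK (mu (ret k.+1)) (Sk_fin k)) -h1 -h2 IH.
Qed.

Lemma ret_dec : nonincreasing_seq ret.
Proof.
apply/nonincreasing_seqP => k; apply/subsetPset.
rewrite [X in _ `<=` X]ret_split; exact: subsetUl.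
Qed.

Lemma W_null : mu (\bigcap_k ret k) = 0%E.
Proof.
apply: Hcons; split; first by apply: bigcapT_measurable => k; exact: mret.
move=> n n0; apply/seteqP; split => x // [h1 h2].
have [_ hx] := h1 n I; have [Ay _] := h2 0%N I.
by apply: (hx n) => //=; rewrite n0 leqnn.
Qed.

Lemma ent_cvg : (fun k => mu (ent k)) @ \oo --> 0%E.
Proof.
have -> : (fun k => mu (ent k)) = mu \o ret by apply: funext => k; rewrite ent_ret.
rewrite -W_null; apply: nonincreasing_cvg_mu.
- apply: le_lt_trans HAf; apply: le_measure; rewrite ?inE; [exact: mret|exact: mA|by move=> x []].
- exact: mret.
- by apply: bigcapT_measurable => k; exact: mret.
- exact: ret_dec.
Qed.


Lemma muT : mu setT = +oo%E.
Proof.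
apply/eqP; rewrite -leye_eq leNgt; apply/negP => hT.
apply: Hninv; exists setT; split => //; split; first by rewrite /Defs.invariant preimage_setT.
rewrite hT andbT; apply: lt_le_trans HA0 _.
by apply: le_measure; rewrite ?inE //; exact: mA.
Qed.

Lemma mE_inf n : mu (E n) = +oo%E.
Proof.
elim: n => [|n IH].
  by rewrite -muT; congr (mu _); apply/seteqP; split => x //= _ i.
apply/eqP; rewrite -leye_eq leNgt; apply/negP => hn.
have : (mu (E n) <= mu (E n.+1) + mu (Pre n A))%E.
  apply: (le_trans _ (measureU2 mu (mE n.+1) (mpre n mA))).
  apply: le_measure; rewrite ?inE; [exact: mE|apply: measurableU; [exact: mE|exact/mpre/mA]|].
  move=> x hx; have [h|h] := pselect (Pre n A x); first by right.
  left => i /= ii; rewrite ltnS leq_eqVlt in ii; case/orP: ii => [/eqP->//|ii].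
  exact: hx.
have hP : (mu (Pre n A) < +oo)%E by rewrite mupre // ; exact: mA.
rewrite IH leye_eq => /eqP h; move: (lte_add_pinfty hn hP).
by rewrite h ltxx.
Qed.

Lemma lim_ge (F : nat -> set X) (c : \bar R) :
  (forall n, measurable (F n)) -> nonincreasing_seq F -> (mu (F 0%N) < +oo)%E ->
  (forall n, (c <= mu (F n))%E) -> (c <= mu (\bigcap_n F n))%E.
Proof.
move=> mF dF F0 hc.
have h := nonincreasing_cvg_mu F0 mF (bigcapT_measurable mF) dF.
rewrite -(cvg_lim (@ereal_hausdorff R) h); apply: lime_ge; first by apply/cvg_ex; eexists; exact: h.
by apply: nearW => n; exact: hc.
Qed.

Lemma fin_union (V : set X) K : measurable V -> (mu V < +oo)%E ->
  (mu (\bigcup_(k in [set k | (k <= K)%N]) Pre k V) < +oo)%E.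
Proof.
move=> mV hV; elim: K => [|K IH].
  have -> : \bigcup_(k in [set k | (k <= 0)%N]) Pre k V = V.
    apply/seteqP; split => x; first by case=> k /=; rewrite leqn0 => /eqP ->.
    by move=> Vx; exists 0%N.
  exact: hV.
have mU : forall K, measurable (\bigcup_(k in [set k | (k <= K)%N]) Pre k V).
  by move=> K'; apply: bigcup_measurable => k _; exact: mpre.
have hP : (mu (Pre K.+1 V) < +oo)%E by rewrite mupre.
have h2 := le_lt_trans (measureU2 mu (mU K) (mpre K.+1 mV)) (lte_add_pinfty IH hP).
apply: le_lt_trans h2.
apply: le_measure; rewrite ?inE; [exact: mU|apply: measurableU; [exact: mU|exact: mpre]|].
move=> x [k /= kK hk]; rewrite leq_eqVlt in kK; case/orP: kK => [/eqP kK|kK].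
  by right; move: hk; rewrite kK.
by left; exists k.
Qed.

Lemma no_sub_inv (U : set X) : measurable U -> U `<=` Pre 1 U ->
  (0 < mu U)%E -> (mu U < +oo)%E -> False.
Proof.
move=> mU sU U0 Uf.
pose F k := Pre k U.
have mF : forall k, measurable (F k) by move=> k; exact: mpre.
have iF : forall k, F k `<=` F k.+1.
  by move=> k x hx; exact: sU.
have dF : nondecreasing_seq F.
  apply/nondecreasing_seqP => k; apply/subsetPset; exact: iF.
have mB : measurable (\bigcup_k F k) by exact: bigcupT_measurable.
have hc : mu \o F = cst (mu U) by apply: funext => k; rewrite /= mupre.
have h : cst (mu U) @ \oo --> mu (\bigcup_k F k).
  rewrite -hc; exact: nondecreasing_cvg_mu.
have hB := cvg_lim (@ereal_hausdorff R) h.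
rewrite lim_cst in hB; last exact: ereal_hausdorff.
apply: Hninv; exists (\bigcup_k F k); split => //; split; last by rewrite -hB U0 Uf.
apply/seteqP; split => x.
  by move=> [k _ hk]; exists k.+1 => //; rewrite /F preS.
move=> [k _ hk]; exists k => //; rewrite /F -preS; exact: iF.
Qed.


Definition heavy (eps : R) y := A y /\ forall m, (eps%:E <= mu (atom m.+1 y))%E.

Lemma heavy_full eps y : heavy eps y -> (eps%:E <= mu (full y))%E.
Proof.
move=> [Ay h].
have -> : full y = \bigcap_m atom m.+1 y.
  apply/seteqP; split => z hz.
    by move=> m _; exact: hz.
  move=> m _; apply: (atom_le (leqnSn m)); exact: hz m I.
apply: lim_ge => //.
- by move=> m; exact: matom.
- apply/nonincreasing_seqP => m; apply/subsetPset; exact: atom_le.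
- apply: le_lt_trans HAf; apply: le_measure; rewrite ?inE; [exact: matom|exact: mA|exact: atom_A].
Qed.

Lemma full_sym y z : full y z -> full z y.
Proof. by move=> h; rewrite (full_eq h); move=> m _. Qed.

Lemma heavy_ret eps y : 0 < eps -> heavy eps y -> exists r, (0 < r)%N /\ A (iter r T y).
Proof.
move=> e0 hy; apply: contrapT => hn.
pose N := ~` \bigcup_(n in [set: nat]) Pre n A.
have mN : measurable N by apply/measurableC/bigcup_measurable => n _; exact/mpre/mA.
have sub : full y `<=` Pre 1 N.
  move=> z hz [n _ hn']; apply: hn; exists n.+1; split => //.
  apply: (full_Aiter (full_sym hz)).
  have h1 : Pre n.+1 A z by rewrite preS; exact: hn'.
  exact: h1.
have := heavy_full hy; rewrite leNgt => /negP; apply.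
have hle : (mu (full y) <= mu (Pre 1 N))%E.
  by apply: le_measure; rewrite ?inE; [exact: mfull|exact: mpre|exact: sub].
apply: (le_lt_trans hle).
by rewrite mupre // Hsw lte_fin.
Qed.

Lemma heavy_shift eps y r : A (iter r T y) -> heavy eps y -> heavy eps (iter r T y).
Proof.
move=> Ar [Ay h]; split => // m; apply: le_trans (h (m + r)%N) _.
exact: (mu_atom_shift m.+1 r y).
Qed.

Lemma no_heavy eps y0 : 0 < eps -> ~ heavy eps y0.
Proof.
move=> e0 hy0.
have hr : forall y, exists r, heavy eps y -> (0 < r)%N /\ A (iter r T y).
  move=> y; have [hy|hy] := pselect (heavy eps y).
    by have [r hr] := heavy_ret e0 hy; exists r.
  by exists 0%N.
have [rf Hrf] := choice hr.
pose nxt y := iter (rf y) T y.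
pose ys t := iter t nxt y0.
have hys : forall t, heavy eps (ys t).
  elim => [//|t IH]; rewrite /ys iterS -/(ys t).
  have [_ hA] := Hrf _ IH; exact: heavy_shift hA IH.
pose D t := full (ys t).
have DA : forall t, D t `<=` A by move=> t; apply: full_A; exact: (hys t).1.
have mD : forall t, measurable (D t) by move=> t; exact: mfull.
have De : forall t, (eps%:E <= mu (D t))%E by move=> t; exact: heavy_full.
have Dstep : forall t x, D t x -> D t.+1 (iter (rf (ys t)) T x).
  by move=> t x hx; rewrite /D /ys iterS -/(ys t); exact: full_shift.
have Ddisj : forall i j, D i <> D j -> D i `&` D j = set0.
  move=> i j hij; apply/seteqP; split => // x [hi hj]; apply: hij.
  by rewrite /D -(full_eq hi) -(full_eq hj).
have [N hN] : exists N : nat, (mu A < (N%:R * eps)%:E)%E.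
  exists (Num.trunc (fine (mu A) / eps)).+1.
  have fA : mu A \is a fin_num by rewrite ge0_fin_numE // measure_ge0.
  rewrite -(fineK fA) lte_fin -ltr_pdivrMr //; exact: truncnS_gt.
have [i [j [ij Dij]]] : exists i j, (i < j)%N /\ D i = D j.
  apply: contrapT => hn.
  have dis : forall i j, (i < j)%N -> D i `&` D j = set0.
    by move=> i j ij; apply: Ddisj => h; apply: hn; exists i, j; split.
  pose U n := \bigcup_(t in [set t | (t < n)%N]) D t.
  have mU : forall n, measurable (U n).
    by move=> n; apply: bigcup_measurable => t _; exact: mD.
  have hU : forall n, ((n%:R * eps)%:E <= mu (U n))%E.
    elim => [|n IH]; first by rewrite mul0r measure_ge0.
    have -> : U n.+1 = U n `|` D n.
      apply/seteqP; split => x.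
        move=> [t /= tn hx]; rewrite ltnS leq_eqVlt in tn.
        case/orP: tn => [/eqP tn|tn]; first by right; rewrite -tn.
        by left; exists t.
      move=> [[t tn hx]|hx]; first by exists t => //=; exact: ltnW.
      by exists n => //=.
    rewrite measureU //; last first.
      apply/seteqP; split => x // [[t tn ht] hn']; rewrite -(dis t n tn); by split.
    rewrite -addn1 natrD mulrDl mul1r EFinD; exact: leeD IH (De n).
  have : ((N%:R * eps)%:E <= mu A)%E.
    apply: le_trans (hU N) _; apply: le_measure; rewrite ?inE; [exact: mU|exact: mA|].
    by move=> x [t _ ht]; exact: DA ht.
  by rewrite leNgt hN.
have [K hK] : exists K, forall t, (t < j)%N -> (rf (ys t) <= K)%N.
  elim: j {ij Dij} => [|j [K hK]]; first by exists 0%N.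
  exists (maxn K (rf (ys j))) => t; rewrite ltnS leq_eqVlt => /orP[/eqP->|tj].
    exact: leq_maxr.
  exact: leq_trans (hK t tj) (leq_maxl _ _).
pose V := \bigcup_(t in [set t | (i <= t < j)%N]) D t.
have mV : measurable V by apply: bigcup_measurable => t _; exact: mD.
have VA : V `<=` A by move=> x [t _ ht]; exact: DA ht.
have DV : D i `<=` V by move=> x hx; exists i => //=; rewrite leqnn ij.
have Vstep : forall x, V x -> exists r, [/\ (0 < r)%N, (r <= K)%N & V (iter r T x)].
  move=> x [t /andP[it tj] hx]; exists (rf (ys t)); split.
  - exact: (Hrf _ (hys t)).1.
  - exact: hK.
  - have h := Dstep t x hx; move: tj; rewrite leq_eqVlt => /orP[/eqP ee|lt].
      by apply: DV; rewrite Dij -ee.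
    by exists t.+1 => //=; rewrite lt andbT; exact: leqW.
pose U := \bigcup_(k in [set k | (k <= K)%N]) Pre k V.
have mUU : measurable U by apply: bigcup_measurable => k _; exact: mpre.
have VU : V `<=` U by move=> x hx; exists 0%N.
apply: (@no_sub_inv U mUU).
- move=> x [k /= kK hk]; rewrite /preimage /=.
  case: k kK hk => [|k] kK hk.
    have [r [r0 rK hv]] := Vstep x hk.
    case: r r0 rK hv => // r _ rK hv.
    by exists r; [exact: ltnW|rewrite -preS].
  by exists k; [exact: ltnW|rewrite -preS].
- apply: (lt_le_trans _ (le_trans (De i) _)); first by rewrite lte_fin.
  apply: le_measure; rewrite ?inE; [exact: mD|exact: mUU|exact: subset_trans DV VU].
- apply: fin_union => //; apply: le_lt_trans HAf.
  by apply: le_measure; rewrite ?inE; [exact: mV|exact: mA|].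
Qed.


Lemma core eps : 0 < eps -> exists M, forall m, (M <= m)%N ->
  forall y, A y -> (mu (atom m y) < eps%:E)%E.
Proof.
move=> e0; apply: contrapT => H.
have H' : forall m, exists y, A y /\ (eps%:E <= mu (atom m y))%E.
  move=> m; apply: contrapT => hn; apply: H; exists m => m' mm' y Ay.
  rewrite ltNge; apply/negP => hle; apply: hn; exists y; split => //.
  exact: le_trans hle (@mu_atom_le m m' y mm').
pose G m := [set y | A y /\ (eps%:E <= mu (atom m.+1 y))%E].
pose Q m s := [/\ size s = m.+1, cyl s `<=` A & (eps%:E <= mu (cyl s))%E].
have GE : forall m, G m = \bigcup_s [set z | Q m s /\ cyl s z].
  move=> m; apply/seteqP; split => y.
    move=> [Ay hy]; exists (word m.+1 y) => //; split; last exact: word_cyl.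
    rewrite /Q -atom_cyl; split; [by rewrite size_mkseq|exact: atom_A|exact: hy].
  move=> [s _ [[hs sA hmu] hz]]; rewrite (cyl_atom hz) hs in sA hmu.
  split => //; apply: sA; exact: atom_in.
have mG : forall m, measurable (G m).
  move=> m; rewrite GE; apply: mbigcup_seq => s.
  have [q|nq] := pselect (Q m s).
    have -> : [set z | Q m s /\ cyl s z] = cyl s.
      by apply/seteqP; split => z; [case|move=> hz; split].
    exact: mcyl.
  have -> : [set z | Q m s /\ cyl s z] = set0 by apply/seteqP; split => z // [].
  exact: measurable0.
have Gd : nonincreasing_seq G.
  apply/nonincreasing_seqP => m; apply/subsetPset => y [Ay hy]; split => //.
  exact: le_trans hy (@mu_atom_le _ _ y (leqnSn _)).
have G0 : (mu (G 0%N) < +oo)%E.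
  apply: le_lt_trans HAf; apply: le_measure; rewrite ?inE; [exact: mG|exact: mA|by move=> y []].
have Ge : forall m, (eps%:E <= mu (G m))%E.
  move=> m; have [y [Ay hy]] := H' m.+1.
  apply: le_trans (hy) _; apply: le_measure; rewrite ?inE; [exact: matom|exact: mG|].
  move=> z hz; split; first exact: (atom_A (ltn0Sn m) Ay hz).
  by rewrite (atom_eq hz).
have := lim_ge mG Gd G0 Ge.
case: (eqVneq (\bigcap_m G m) set0) => [->|/set0P[y0 hy0]].
  by rewrite measure0 leNgt lte_fin e0.
move=> _; apply: (@no_heavy eps y0 e0); split; first exact: (hy0 0%N I).1.
by move=> m; exact: (hy0 m I).2.
Qed.

Lemma join_atom n b z : join_iter T alpha n b -> b z -> b = atom n z.
Proof.
move=> [f [hf ->]] hz; apply/seteqP; split => w hw k kn.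
  by rewrite (cell_uniq (hf k kn) (hz k kn)) (cell_uniq (hf k kn) (hw k kn)).
rewrite -(cell_uniq (hf k kn) (hz k kn)) -(hw k kn); exact: cell_in.
Qed.

Lemma atom_join n y : join_iter T alpha n (atom n y).
Proof.
exists (fun k => cell (iter k T y)); split; first by move=> k _; exact: cell_alpha.
exact: atom_pre.
Qed.

Lemma ex_min (P : nat -> Prop) n : P n -> exists k, P k /\ forall i, (i < k)%N -> ~ P i.
Proof.
move=> Pn; apply: contrapT => H.
suff: forall m j, (j <= m)%N -> ~ P j by move/(_ n n (leqnn n)).
elim => [|m IH] j hj Pj.
  by apply: H; exists j; split => // i; rewrite leqn0 in hj; rewrite (eqP hj).
apply: H; exists j; split => // i ij Pi; apply: (IH i) => //; lia.
Qed.


Lemma ent_small eps : 0 < eps -> exists K, forall k, (K <= k)%N -> (mu (ent k) < eps%:E)%E.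
Proof.
move=> e0; have := ent_cvg; move/fine_cvgP => [hfin /cvgrPdist_lt hcv].
have [N1 _ h1] := hfin; have [N2 _ h2] := hcv eps e0.
exists (maxn N1 N2) => k hk.
have f1 : mu (ent k) \is a fin_num by apply: h1; rewrite /=; lia.
have f2 := h2 k ltac:(rewrite /=; lia).
rewrite -(fineK f1) lte_fin; move: f2; rewrite /= sub0r normrN.
by apply: le_lt_trans; exact: ler_norm.
Qed.

Lemma atom_small eps : 0 < eps -> exists N, (0 < N)%N /\ forall n, (N <= n)%N ->
  forall a, finpos_atoms mu (join_iter T alpha n) a -> (mu a < eps%:E)%E.
Proof.
move=> e0.
have [K hK] := ent_small e0.
have [M hM] := core e0.
exists (K + M).+1; split => // n hn a [ha /andP[a0 af]].
have [aE|/set0P[z hz]] := eqVneq a set0; first by rewrite aE measure0 ltxx in a0.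
have az := join_atom ha hz.
have [k0 [k0n Ak0]] : exists k, (k < n)%N /\ A (iter k T z).
  apply: contrapT => hn'.
  have : (mu (E n) <= mu a)%E.
    apply: le_measure; rewrite ?inE; [exact: mE|rewrite az; exact: matom|].
    move=> w hw; rewrite az => k kn; rewrite !cell_nA //.
      by move=> Ak; apply: hn'; exists k.
    exact: hw.
  by rewrite mE_inf leye_eq => /eqP h; rewrite h ltxx in af.
have [k [[kn Ak] kmin]] := @ex_min (fun k => (k < n)%N /\ A (iter k T z)) k0 (conj k0n Ak0).
have nA : forall i, (i < k)%N -> ~ A (iter i T z).
  by move=> i ik Ai; apply: (kmin i ik); split => //; exact: ltn_trans ik kn.
have [kK|kK] := leqP K k.
  apply: le_lt_trans (hK k kK); apply: le_measure; rewrite ?inE; [rewrite az; exact: matom|exact: ment|].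
  move=> w hw; rewrite az in hw; split.
    move=> i ik; have h := hw i (ltn_trans ik kn); rewrite (cell_nA (nA i ik)) in h.
    by move=> Aw; have := cell_in (iter i T w); rewrite h.
  exact: (cell_A Ak (hw k kn)).
have hnk : (M <= n - k)%N by lia.
apply: le_lt_trans (hM _ hnk _ Ak); rewrite az.
by have := mu_atom_shift (n - k) k z; rewrite subnK //; exact: ltnW.
Qed.

Lemma atom_pos n : (0 < n)%N -> exists a, finpos_atoms mu (join_iter T alpha n) a.
Proof.
move=> n0; apply: contrapT => H.
pose Pc s := [set z | (size s = n /\ cyl s `<=` A) /\ cyl s z].
have P0 : forall s, measurable (Pc s) /\ mu (Pc s) = 0%E.
  move=> s; have [q|nq] := pselect (size s = n /\ cyl s `<=` A).
    have -> : Pc s = cyl s.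
      by apply/seteqP; split => z; [case|move=> hz; split].
    split; first exact: mcyl.
    have [->|/set0P[z hz]] := eqVneq (cyl s) set0; first exact: measure0.
    apply/eqP; rewrite eq_le measure_ge0 andbT leNgt; apply/negP => hpos; apply: H.
    exists (cyl s); split; first by rewrite (cyl_atom hz) q.1; exact: atom_join.
    rewrite hpos /=; apply: le_lt_trans HAf; apply: le_measure; rewrite ?inE.
    - exact: mcyl.
    - exact: mA.
    - exact: q.2.
  have -> : Pc s = set0 by apply/seteqP; split => z // [].
  by split; [exact: measurable0|exact: measure0].
have sub : A `<=` \bigcup_s Pc s.
  move=> y Ay; exists (word n y) => //; split; last exact: word_cyl.
  by rewrite -atom_cyl size_mkseq; split => //; exact: atom_A.
have mU : measurable (\bigcup_s Pc s) by apply: mbigcup_seq => s; exact: (P0 s).1.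
have h0 : mu (\bigcup_s Pc s) = 0%E.
  exact: (null_bigcup_seq (fun s => (P0 s).1) (fun s => (P0 s).2)).
have h : (mu A <= mu (\bigcup_s Pc s))%E.
  exact: (le_measure mu (mem_set mA) (mem_set mU) sub).
rewrite h0 in h; by have := lt_le_trans HA0 h; rewrite ltxx.
Qed.

Lemma main_cvg : max_atom mu T alpha n @[n --> \oo] --> 0%E.
Proof.
have key : forall eps, 0 < eps -> exists N, forall n, (N <= n)%N ->
    (0 <= max_atom mu T alpha n <= eps%:E)%E.
  move=> eps e0; have [N [N0 hN]] := atom_small e0.
  exists N => n hn; apply/andP; split.
    have [a ha] := atom_pos (leq_trans N0 hn).
    apply: le_trans (measure_ge0 mu a) _; apply: ereal_sup_ubound; by exists a.
  apply/ereal_supP => _ [a ha <-]; apply: ltW; exact: (hN n hn a ha).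
apply/fine_cvgP; split.
  have [N hN] := key 1 ltr01; exists N => // n hn.
  have /andP[h0 h1] := hN n hn; rewrite ge0_fin_numE //; exact: le_lt_trans h1 (ltey _).
apply/cvgrPdist_le => eps e0; have [N hN] := key eps e0; exists N => // n hn.
have /andP[h0 h1] := hN n hn.
have fin : max_atom mu T alpha n \is a fin_num.
  by rewrite ge0_fin_numE //; exact: le_lt_trans h1 (ltey _).
rewrite /= sub0r normrN ger0_norm; last by rewrite fine_ge0.
by rewrite -lee_fin fineK.
Qed.

End Main.

Theorem lemma6p1 (d : measure_display) (X : measurableType d) (R : realType)
    (mu : {measure set X -> \bar R}) (T : X -> X)
    (alpha : set (set X)) (A : set X) :
  standard_borel X R ->
  sigma_finite setT mu ->
  measure_preserving mu T ->
  type_II_infty mu T ->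
  local_partition mu alpha A ->
  sweep_out mu T A ->
  max_atom mu T alpha n @[n --> \oo] --> 0%E.
Proof.
move=> _ _ [HTm HTp] [Hcons Hninv] [[Hcnt [Hmeas [Htriv Hcov]]] [/andP[HA0 HAf] [HAc _]]] Hsw.
case/pfcard_geP: Hcnt => [a0|[f]].
  by rewrite a0 in HAc.
have He1 : forall n, alpha (f n) by move=> n; exact: (@funS _ _ _ _ f n I).
have He2 : forall x, exists n, f n x.
  move=> x; have : (\bigcup_(a in alpha) a) x by rewrite Hcov.
  move=> [a aa ax]; have [n _ fn] := @surj _ _ _ _ f a aa.
  by exists n; rewrite fn.
exact: (main_cvg HTm HTp Hcons Hninv Hmeas Htriv He1 He2 HA0 HAf HAc Hsw).
Qed.
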